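(* Let $S$ be a set of $9$ points of $PG(3,2)$ which is a strong blocking set, i.e. for every plane $\sigma$ of $PG(3,2)$ the points of $\sigma\cap S$ span $\sigma$. Then through each point $P\in S$ there pass exactly $2$ lines of $PG(3,2)$ entirely contained in $S$.
   Context: $PG(3,2)$ is the $3$-dimensional projective space over $\mathbb{F}_2$ (15 points, each line has 3 points, each plane has 7 points). A strong blocking set in $PG(3,2)$ is a set of points $S$ such that for every plane $\sigma$, the span $\langle \sigma\cap S\rangle$ equals $\sigma$. A strong blocking set of size $9$ (the minimum possible size) is called a minimal strong blocking set. *)

(* Defs.v *)
(* PG(3,2) modelled as the projective space of F_2^4:
   points = nonzero row vectors of 'rV['F_2]_4 (over F_2 each 1-dim subspace
   has exactly one nonzero vector). Subspaces of PG(3,2) are row spaces. *)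
From mathcomp Require Import all_boot all_order all_algebra.
Set Implicit Arguments. Unset Strict Implicit. Unset Printing Implicit Defensive.
Import GRing.Theory.
Local Open Scope ring_scope.

Definition vec := 'rV['F_2]_4.

Definition ppoints (m : nat) (U : 'M['F_2]_(m, 4)) : {set vec} :=
  [set x : vec | (x != 0) && (x <= U)%MS].

Definition is_plane (U : 'M['F_2]_4) : bool := \rank U == 3%N.

Definition is_line (U : 'M['F_2]_4) : bool := \rank U == 2%N.

Definition pspan (A : {set vec}) : 'M['F_2]_4 := (\sum_(x in A) <<x>>)%MS.

Definition strong_blocking (S : {set vec}) : Prop :=
  forall U : 'M['F_2]_4, is_plane U ->
    (pspan (S :&: ppoints U) == U)%MS.

Definition lines_through_in (P : vec) (S : {set vec}) : {set {set vec}} :=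
  [set L : {set vec} | [exists U : 'M['F_2]_4, is_line U && (L == ppoints U)]
                       && (P \in L) && (L \subset S)].

Definition pg32_points : {set vec} := [set x : vec | x != 0].

(* Main.v *)
Require Import Defs.
From mathcomp Require Import all_boot all_order all_algebra.
Set Implicit Arguments. Unset Strict Implicit. Unset Printing Implicit Defensive.
Import GRing.Theory.

Definition bitl (n : nat) : seq bool := [:: odd n; odd n./2; odd n./2./2; odd n./2./2./2].
Definition ofbits (l : seq bool) : nat := foldr (fun (b : bool) acc => b + acc.*2) 0 l.
Definition xorn i j := ofbits [seq x.1 (+) x.2 | x <- zip (bitl i) (bitl j)].
Definition perpn a n := ~~ odd (count id [seq x.1 && x.2 | x <- zip (bitl a) (bitl n)]).
Definition Tl (bl : seq bool) a := [seq n <- iota 1 15 | nth false bl n && perpn a n].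
Definition inline i j (T : seq nat) := all (fun n => n \in [:: i; j; xorn i j]) T.
Definition strongb (bl : seq bool) :=
  all (fun a => let T := Tl bl a in ~~ inline (nth 0 T 0) (nth 0 T 1) T) (iota 1 15).
Definition Ylist bl p := [seq y <- iota 1 15 | nth false bl y && (y != p) && nth false bl (xorn p y)].
Definition wit bl p := let Y := Ylist bl p in let y1 := head 0 Y in
  let y2 := head 0 [seq y <- Y | (y != y1) && (y != xorn p y1)] in (y1,y2).
Definition conclp bl p := let w := wit bl p in
   [&& w.1 \in Ylist bl p, w.2 \in Ylist bl p, w.2 != w.1, w.2 != xorn p w.1 &
     all (fun y => y \in [:: w.1; xorn p w.1; w.2; xorn p w.2]) (Ylist bl p)].
Definition concl bl := all (fun p => nth false bl p ==> conclp bl p) (iota 1 15).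
Definition check bl := if nth false bl 0 then true else if count id bl == 9 then
  if strongb bl then concl bl else true else true.
Fixpoint all_lists n := match n with 0 => [:: [::]]
  | n.+1 => [seq b :: l | b <- [:: true; false], l <- all_lists n] end.
Lemma check_all : all check (all_lists 16). Proof. vm_compute. reflexivity. Qed.

Lemma all_lists_mem (l : seq bool) : l \in all_lists (size l).
Proof.
elim: l => [|b l IH] //=.
case: b; rewrite mem_cat; apply/orP; [left|right; rewrite mem_cat; apply/orP; left];
  by apply/mapP; exists l.
Qed.

Lemma bitl_inj16 : all (fun n => all (fun m => (bitl n == bitl m) ==> (n == m)) (iota 0 16)) (iota 0 16).
Proof. by vm_compute. Qed.

Lemma bitl_ofbits (l : seq bool) : size l = 4 -> bitl (ofbits l) = l.
Proof.
by case: l => [|b0 [|b1 [|b2 [|b3 [|]]]]] //= _; case: b0; case: b1; case: b2; case: b3.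
Qed.

Lemma ofbits_lt (l : seq bool) : size l = 4 -> ofbits l < 16.
Proof.
by case: l => [|b0 [|b1 [|b2 [|b3 [|]]]]] //= _; case: b0; case: b1; case: b2; case: b3.
Qed.

Lemma xorn_lt i j : xorn i j < 16.
Proof. by apply: ofbits_lt. Qed.

Lemma count_card (f : nat -> bool) :
  #|[set n : 'I_16 | f n]| = count f (iota 0 16).
Proof.
rewrite -val_enum_ord count_map -sum1_card big_mkcond /= -sum1_count big_mkcond /=.
by rewrite big_enum_cond [RHS]big_mkcond; apply: eq_bigr => i _; rewrite inE.
Qed.
Local Open Scope ring_scope.
Lemma F2_nat (k : nat) : (k%:R : 'F_2) = (odd k)%:R.
Proof. by rewrite -(@Fp_nat_mod 2 isT k) modn2. Qed.
Lemma F2_bool_inj (b c : bool) : (b%:R : 'F_2) = c%:R -> b = c.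
Proof. by case: b; case: c => //= /eqP; rewrite ?oner_eq0 // eq_sym oner_eq0. Qed.
Lemma vec_add2 (x : vec) : x + x = 0.
Proof. apply/matrixP => i j; rewrite !mxE. exact: (addrr_pchar2 (@pchar_Fp 2 isT)). Qed.
Lemma card_vec : #|{: vec}| = 16%N.
Proof. by rewrite card_mx card_Fp. Qed.

Lemma card_subsp m (U : 'M['F_2]_(m, 4)) :
  #|[set x : vec | (x <= U)%MS]| = (2 ^ \rank U)%N.
Proof.
have -> : [set x : vec | (x <= U)%MS] = [set u *m row_base U | u : 'rV['F_2]_(\rank U)].
  apply/setP => x; rewrite inE; apply/idP/imsetP.
    by rewrite -(eq_row_base U) => /submxP [u ->]; exists u.
  by move=> [u _ ->]; rewrite -(eq_row_base U) submxMl.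
rewrite card_imset; last exact: row_free_inj (row_base_free U).
by rewrite card_mx card_Fp // mul1n.
Qed.

Lemma card_ppoints m (U : 'M['F_2]_(m, 4)) :
  #|ppoints U| = (2 ^ \rank U).-1.
Proof.
rewrite -card_subsp [in RHS](cardsD1 0) inE sub0mx /=.
by apply: eq_card => x; rewrite !inE.
Qed.

Lemma vec_opp (x : vec) : - x = x.
Proof. by rewrite -[LHS]add0r -(vec_add2 x) -addrA subrr addr0. Qed.

Lemma vec_eq_add (x y : vec) : (x + y == 0) = (x == y).
Proof. by rewrite -{1}(vec_opp y) subr_eq0. Qed.

Lemma card3 (P Y : vec) : P != 0 -> Y != 0 -> P != Y -> #|P |: (Y |: [set P + Y])| = 3%N.
Proof.
move=> P0 Y0 PY.
rewrite !cardsU1 cards1 !inE.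
have h1 : (Y == P + Y) = false.
  apply/negbTE; apply: contra P0 => /eqP h.
  by apply/eqP; rewrite -[P]addr0 -(vec_add2 Y) addrA -h vec_add2.
have h2 : (P == P + Y) = false.
  apply/negbTE; apply: contra Y0 => /eqP h.
  by apply/eqP; rewrite -[Y]add0r -(vec_add2 P) -addrA -h vec_add2.
by rewrite h1 h2 (negbTE PY).
Qed.

Lemma pspan_small (A : {set vec}) (x y : vec) :
  A \subset x |: (y |: [set x + y]) -> (\rank (pspan A) <= 2)%N.
Proof.
move=> sA.
have : (pspan A <= (x + y)%MS)%MS.
  apply/sumsmx_subP => z zA; rewrite genmxE.
  move: (subsetP sA z zA); rewrite !inE => /orP [/eqP->|/orP [/eqP->|/eqP->]].
  - exact: addsmxSl.
  - exact: addsmxSr.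
  - exact: addmx_sub_adds.
move/mxrankS => h; apply: leq_trans h _.
apply: leq_trans (mxrank_adds_leqif x y).1 _.
by rewrite -[2%N]/(1+1)%N leq_add // rank_leq_row.
Qed.

Lemma line_shape (U : 'M['F_2]_4) (P : vec) : \rank U = 2%N -> P \in ppoints U ->
  exists Y, [/\ Y \in ppoints U, Y != P & ppoints U = P |: (Y |: [set P + Y])].
Proof.
move=> rU PU.
have c3 : #|ppoints U| = 3%N by rewrite card_ppoints rU.
have : (0 < #|ppoints U :\ P|)%N.
  by move: (cardsD1 P (ppoints U)); rewrite PU c3 add1n => -[<-].
case/card_gt0P => Y; rewrite !inE => /andP [YP /andP [Y0 YU]].
move: (PU); rewrite inE => /andP [P0 PU'].
exists Y; split => //; first by rewrite inE Y0.
apply/eqP; rewrite eq_sym eqEcard c3 card3 // ?andbT; last by rewrite eq_sym.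
apply/subsetP => z; rewrite !inE => /orP [/eqP->|/orP [/eqP->|/eqP->]].
- by rewrite P0.
- by rewrite Y0.
- by rewrite vec_eq_add eq_sym YP addmx_sub.
Qed.

Lemma line_exists (P Y : vec) : P != 0 -> Y != 0 -> P != Y ->
  exists U : 'M['F_2]_4, is_line U && (P |: (Y |: [set P + Y]) == ppoints U).
Proof.
move=> P0 Y0 PY.
pose U := (P + Y)%MS.
have sub : P |: (Y |: [set P + Y]) \subset ppoints U.
  apply/subsetP => z; rewrite !inE => /orP [/eqP->|/orP [/eqP->|/eqP->]].
  - by rewrite P0 addsmxSl.
  - by rewrite Y0 addsmxSr.
  - by rewrite vec_eq_add PY addmx_sub_adds.
have rle : (\rank U <= 2)%N.
  apply: leq_trans (mxrank_adds_leqif P Y).1 _.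
  by rewrite !rank_rV P0 Y0.
have c := subset_leq_card sub; rewrite card3 // card_ppoints in c.
have rU : \rank U = 2%N.
  by move: rle c; case: (\rank U) => [|[|[|]]].
exists U; rewrite /is_line rU eqxx /=.
by rewrite eqEcard sub card_ppoints rU card3.
Qed.

Definition decode (n : nat) : vec := \row_(j < 4) ((nth false (bitl n) j : nat)%:R).

Lemma mx11_eq0 (M : 'M['F_2]_1) : (M == 0) = (M 0 0 == 0).
Proof.
apply/eqP/eqP => [->|h]; first by rewrite mxE.
by apply/matrixP => i j; rewrite !ord1 h mxE.
Qed.

Lemma decode_perp a n : (decode n <= kermx (decode a)^T)%MS = perpn a n.
Proof.
rewrite sub_kermx mx11_eq0 mxE.
under eq_bigr do rewrite !mxE.
rewrite !big_ord_recr big_ord0 /= /perpn /=.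
move: (odd n) (odd n./2) (odd n./2./2) (odd n./2./2./2).
move: (odd a) (odd a./2) (odd a./2./2) (odd a./2./2./2).
by do 8! case.
Qed.

Lemma F2_xor (b c : bool) : ((b (+) c : nat)%:R : 'F_2) = (b : nat)%:R + (c : nat)%:R.
Proof.
case: b; case: c => //=; rewrite ?addr0 ?add0r //.
by rewrite (addrr_pchar2 (@pchar_Fp 2 isT)).
Qed.

Lemma decode_xorn i j : decode (xorn i j) = decode i + decode j.
Proof.
apply/rowP => k; rewrite !mxE /xorn bitl_ofbits; last by [].
by case: k => [[|[|[|[|]]]] ?] //=; rewrite F2_xor.
Qed.

Lemma decode0 : decode 0 = 0.
Proof. by apply/rowP => k; rewrite !mxE; case: k => [[|[|[|[|]]]] ?]. Qed.

Lemma decode_inj n m : (n < 16)%N -> (m < 16)%N -> decode n = decode m -> n = m.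
Proof.
move=> hn hm H.
have e (k : 'I_4) : nth false (bitl n) k = nth false (bitl m) k.
  by apply: F2_bool_inj; move: (congr1 (fun v : vec => v 0 k) H); rewrite !mxE.
have eb : bitl n = bitl m.
  rewrite /bitl; congr [:: _; _; _; _].
  - exact: (e (@Ordinal 4 0 isT)).
  - exact: (e (@Ordinal 4 1 isT)).
  - exact: (e (@Ordinal 4 2 isT)).
  - exact: (e (@Ordinal 4 3 isT)).
move/allP: bitl_inj16 => /(_ n); rewrite mem_iota hn => /(_ isT) /allP /(_ m).
by rewrite mem_iota hm eb eqxx => /(_ isT) /eqP.
Qed.

Lemma decode_surj (x : vec) : exists2 n, (n < 16)%N & x = decode n.
Proof.
pose D := [set decode (val n) | n : 'I_16].
have cD : #|D| = 16%N.
  rewrite card_imset ?card_ord // => a b h; apply: val_inj.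
  exact: (decode_inj (ltn_ord a) (ltn_ord b) h).
have : x \in D.
  have -> : D = setT by apply/eqP; rewrite eqEcard subsetT cardsT card_vec cD.
  by rewrite inE.
by case/imsetP => n _ ->; exists n.
Qed.

Lemma Lswap (P Y : vec) : P |: (P + Y |: [set P + (P + Y)]) = P |: (Y |: [set P + Y]).
Proof.
rewrite addrA vec_add2 add0r; apply/setP => z; rewrite !inE.
by rewrite [X in _ || X]orbC.
Qed.

Lemma decode_nz n : (n < 16)%N -> (decode n != 0) = (n != 0%N).
Proof.
move=> hn; apply/idP/idP; apply: contraNN => /eqP h.
  by rewrite h decode0.
by apply/eqP; apply: (decode_inj hn (isT : (0 < 16)%N)); rewrite h decode0.
Qed.

Lemma decode_eq n m : (n < 16)%N -> (m < 16)%N -> (decode n == decode m) = (n == m).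
Proof.
move=> hn hm; apply/eqP/eqP => [|->] //; exact: decode_inj.
Qed.

Close Scope ring_scope.

Lemma Ylist_mem bl p y : y \in Ylist bl p ->
  [/\ y < 16, y != 0, nth false bl y, y != p & nth false bl (xorn p y)].
Proof.
rewrite mem_filter mem_iota => /andP [/andP [/andP [h1 h2] h3] /andP [y1 y2]].
by split => //; rewrite -lt0n.
Qed.

Theorem lemma2p2 (S : {set vec}) :
  S \subset pg32_points -> #|S| = 9 -> strong_blocking S ->
  forall P, P \in S -> #|lines_through_in P S| = 2.
Proof.
move=> sub card strong P PS.
pose f := fun n => decode n \in S.
pose bl := mkseq f 16.
have gE n : n < 16 -> nth false bl n = f n by move=> h; rewrite nth_mkseq.
have ch : check bl.
  move/allP: check_all; apply.
  by have := all_lists_mem bl; rewrite size_mkseq.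
have S0 : (0 : vec)%R \notin S.
  by apply/negP => /(subsetP sub); rewrite inE eqxx.
have h0 : nth false bl 0 = false by rewrite gE // /f decode0 (negbTE S0).
have hc : count id bl = 9.
  have -> : count id bl = count f (iota 0 16) by rewrite count_map.
  rewrite -count_card; transitivity #|S|; last exact: card.
  have -> : S = (fun n : 'I_16 => decode n) @: [set n : 'I_16 | f n].
    apply/setP => x; apply/idP/imsetP.
      move=> xS; case: (decode_surj x) => n hn ex.
      by exists (Ordinal hn); rewrite // inE /f /= -ex.
    by move=> [n]; rewrite inE => fn ->.
  rewrite card_imset; first by apply: eq_card => n; rewrite !inE.
  move=> a b h; apply: val_inj.
  exact: (decode_inj (ltn_ord a) (ltn_ord b) h).
have hs : strongb bl.
  apply/allP => a; rewrite mem_iota => /andP [a1 a16].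
  apply/negP => Hin.
  set T := Tl bl a in Hin.
  pose U := kermx (decode a)^T.
  have a0 : (decode a != 0)%R by rewrite decode_nz // -lt0n.
  have pl : is_plane U by rewrite /is_plane mxrank_ker mxrank_tr rank_rV a0.
  have r3 : \rank (pspan (S :&: ppoints U)) = 3 by rewrite (eqmx_rank (strong U pl)); exact/eqP.
  have : \rank (pspan (S :&: ppoints U)) <= 2.
    apply: (@pspan_small _ (decode (nth 0 T 0)) (decode (nth 0 T 1))).
    rewrite -decode_xorn; apply/subsetP => z; rewrite !inE => /andP [zS /andP [z0 zU]].
    case: (decode_surj z) => n hn zn; subst z.
    have nT : n \in T.
      rewrite mem_filter mem_iota gE // /f zS -decode_perp zU /=.
      by rewrite hn andbT lt0n -decode_nz.
    move/allP: Hin => /(_ n nT); rewrite !inE.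
    by case/or3P => /eqP ->; rewrite eqxx ?orbT.
  by rewrite r3.
have hcon : concl bl by move: ch; rewrite /check h0 hc eqxx hs.
case: (decode_surj P) => p hp eP.
have p0 : p != 0 by rewrite -decode_nz // -eP; apply: contraNneq S0 => <-.
have cp : conclp bl p.
  by move/allP: hcon => /(_ p); rewrite mem_iota lt0n p0 hp gE // /f -eP PS; apply.
move: cp; rewrite /conclp; set y1 := (wit bl p).1; set y2 := (wit bl p).2.
case/and5P => y1Y y2Y y21 y2x1 Hall.
pose L y := P |: (decode y |: [set (P + decode y)%R]).
have Lline y : y \in Ylist bl p -> L y \in lines_through_in P S.
  case/Ylist_mem => yh y0 fy yp fx.
  rewrite inE; apply/andP; split; first (apply/andP; split).
  - apply/existsP; apply: line_exists.
    + by rewrite eP decode_nz.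
    + by rewrite decode_nz.
    + by rewrite eP decode_eq // eq_sym.
  - by rewrite !inE eqxx.
  - apply/subsetP => z; rewrite !inE => /or3P [] /eqP ->.
    + exact: PS.
    + by move: fy; rewrite gE.
    + by move: fx; rewrite eP -decode_xorn gE // xorn_lt.
have eqlines : lines_through_in P S = [set L y1; L y2].
  apply/setP => LL; apply/idP/idP.
  - rewrite inE => /andP [/andP [/existsP [U /andP [lU /eqP LU]] PL] LS].
    rewrite LU in PL LS; have [Y [YU YP LE]] := line_shape (eqP lU) PL.
    case: (decode_surj Y) => m hm eY.
    have mY : m \in Ylist bl p.
      rewrite mem_filter mem_iota hm andbT.
      move: (YU); rewrite inE eY decode_nz // -lt0n => /andP [-> _].
      rewrite gE // /f -eY (subsetP LS) ?LE ?inE ?eqxx ?orbT //=.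
      rewrite eP eY decode_eq // in YP; rewrite YP /=.
      rewrite gE ?xorn_lt // /f decode_xorn -eP -eY (subsetP LS) // LE !inE eqxx.
      by rewrite !orbT.
    move/allP: Hall => /(_ m mY); rewrite !inE LU LE eY.
    case/or4P => /eqP ->.
    + by rewrite eqxx.
    + by rewrite decode_xorn -eP Lswap eqxx.
    + by rewrite eqxx orbT.
    + by rewrite decode_xorn -eP Lswap eqxx orbT.
  - by case/set2P => ->; apply: Lline.
rewrite eqlines cards2.
suff -> : L y1 != L y2 by [].
apply/eqP => E.
have : decode y2 \in L y2 by rewrite !inE eqxx orbT.
rewrite -E !inE.
case/Ylist_mem: y1Y => h1 _ _ _ _; case/Ylist_mem: y2Y => h2 _ _ y2p _.
by rewrite eP -decode_xorn !decode_eq ?xorn_lt // (negbTE y2p) (negbTE y21) (negbTE y2x1).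
Qed.
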